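(* Let $\gamma$ be a smooth Jordan curve, fix $r\in(0,1/2)$, and let $T_n\in T_{r,\theta_n}$ ($\theta_n\in(0,\pi)$) be a sequence of isosceles trapezoids inscribed in $\gamma$ converging to a point $p\in\gamma$ (all four vertices converge to $p$). Then $p$ is a vertex of $\gamma$, i.e. the derivative of the curvature of $\gamma$ vanishes at $p$.
   Context: For $r\in(0,1/2]$, $\theta\in(0,\pi)$ and $z\neq w\in\mathbb{C}$, let $z',w'$ be obtained by rotating $z,w$ clockwise by angle $\theta$ about the point $(1-r)z+rw$. $T_{r,\theta}$ is the set of 4-point sets $\{z,w,z',w'\}\subset\mathbb{C}$ obtained this way (isosceles trapezoids of aspect ratio $r$ and angle $\theta$); such a set is inscribed in $\gamma$ if it is contained in $\gamma$. *)

(* Defs.v *)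
(* concrete reals R, with Coquelicot for derivatives and limits.
   Points of the complex plane are represented as pairs (x, y) : R * R. *)
From Stdlib Require Import Reals.
From Coquelicot Require Import Coquelicot.
Open Scope R_scope.

Definition smooth (f : R -> R) : Prop :=
  forall (n : nat) (x : R), ex_derive (Derive_n f n) x.

Definition smooth_jordan_curve (gx gy : R -> R) (L : R) : Prop :=
  0 < L /\
  smooth gx /\ smooth gy /\
  (forall t, gx (t + L) = gx t /\ gy (t + L) = gy t) /\
  (forall t, 0 < (Derive gx t) ^ 2 + (Derive gy t) ^ 2) /\
  (forall s t, 0 <= s < L -> 0 <= t < L ->
     gx s = gx t -> gy s = gy t -> s = t).

Definition on_curve (gx gy : R -> R) (q : R * R) : Prop :=
  exists t, gx t = fst q /\ gy t = snd q.

Definition curvature (gx gy : R -> R) (t : R) : R :=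
  (Derive gx t * Derive_n gy 2 t - Derive gy t * Derive_n gx 2 t)
  / (sqrt ((Derive gx t) ^ 2 + (Derive gy t) ^ 2)) ^ 3.

Definition is_vertex (gx gy : R -> R) (p : R * R) : Prop :=
  exists t, gx t = fst p /\ gy t = snd p /\ Derive (curvature gx gy) t = 0.

Definition rot_cw (c : R * R) (th : R) (q : R * R) : R * R :=
  let a := fst q - fst c in
  let b := snd q - snd c in
  (fst c + (a * cos th + b * sin th), snd c + (- a * sin th + b * cos th)).

Definition trap_center (r : R) (z w : R * R) : R * R :=
  ((1 - r) * fst z + r * fst w, (1 - r) * snd z + r * snd w).

Definition trap_z' (r th : R) (z w : R * R) : R * R := rot_cw (trap_center r z w) th z.
Definition trap_w' (r th : R) (z w : R * R) : R * R := rot_cw (trap_center r z w) th w.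

Definition trapezoid (r th : R) (z w : R * R) : R * R -> Prop :=
  fun q => q = z \/ q = w \/ q = trap_z' r th z w \/ q = trap_w' r th z w.

Definition inscribed (gx gy : R -> R) (T : R * R -> Prop) : Prop :=
  forall q, T q -> on_curve gx gy q.

Definition pt_lim (u : nat -> R * R) (p : R * R) : Prop :=
  is_lim_seq (fun n => fst (u n)) (fst p) /\ is_lim_seq (fun n => snd (u n)) (snd p).

(* Main.v *)
Require Import Defs.
From Stdlib Require Import Reals Lra Lia ZArith Nsatz ClassicalEpsilon.
From Coquelicot Require Import Coquelicot.
Open Scope R_scope.

Lemma rolle2 (f f' : R -> R) a b : a < b -> (forall x, is_derive f x (f' x)) ->
  f a = 0 -> f b = 0 -> exists c, a < c < b /\ f' c = 0.
Proof.
  intros Hab Hd Ha Hb.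
  destruct (MVT_cor2 f f' a b Hab) as [c [Hc1 Hc2]].
  { intros c _. apply is_derive_Reals. apply Hd. }
  exists c. split; [exact Hc2|].
  rewrite Ha, Hb in Hc1.
  assert (f' c * (b - a) = 0) by lra.
  apply Rmult_integral in H. destruct H; [assumption| lra].
Qed.

Lemma rolle_c2 (h : nat -> R -> R) a b c :
  (forall k x, (k < 2)%nat -> is_derive (h k) x (h (S k) x)) ->
  a < b -> b < c -> h 0%nat a = 0 -> h 0%nat b = 0 -> h 0%nat c = 0 ->
  exists w, a < w < c /\ h 2%nat w = 0.
Proof.
  intros Hd H1 H2 Ha Hb Hc.
  destruct (rolle2 (h 0%nat) (h 1%nat) a b) as [u [Hu Hu']]; auto.
  destruct (rolle2 (h 0%nat) (h 1%nat) b c) as [v [Hv Hv']]; auto.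
  destruct (rolle2 (h 1%nat) (h 2%nat) u v) as [w [Hw Hw']]; auto; try lra.
  exists w; split; [lra|auto].
Qed.

Lemma rolle_c3 (h : nat -> R -> R) a b c d :
  (forall k x, (k < 3)%nat -> is_derive (h k) x (h (S k) x)) ->
  a < b -> b < c -> c < d -> h 0%nat a = 0 -> h 0%nat b = 0 -> h 0%nat c = 0 ->
  h 0%nat d = 0 ->
  exists w, a < w < d /\ h 3%nat w = 0.
Proof.
  intros Hd H1 H2 H3 Ha Hb Hc Hdd.
  destruct (rolle2 (h 0%nat) (h 1%nat) a b) as [u [Hu Hu']]; auto.
  destruct (rolle2 (h 0%nat) (h 1%nat) b c) as [v [Hv Hv']]; auto.
  destruct (rolle2 (h 0%nat) (h 1%nat) c d) as [v2 [Hv2 Hv2']]; auto.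
  destruct (rolle_c2 (fun k => h (S k)) u v v2) as [w [Hw Hw']]; auto; try lra.
  intros k x Hk. apply Hd. lia.
  exists w; split; [lra|auto].
Qed.

Lemma rolle_u1 (h : nat -> R -> R) lo hi a b :
  (forall k x, (k < 1)%nat -> is_derive (h k) x (h (S k) x)) ->
  lo < a < hi -> lo < b < hi -> a <> b ->
  h 0%nat a = 0 -> h 0%nat b = 0 -> exists w, lo < w < hi /\ h 1%nat w = 0.
Proof.
  intros Hd Ia Ib N Ha Hb.
  destruct (Rlt_le_dec a b).
  - destruct (rolle2 (h 0%nat) (h 1%nat) a b) as [w [Hw Hw']]; auto.
    exists w; split; [lra|auto].
  - destruct (rolle2 (h 0%nat) (h 1%nat) b a) as [w [Hw Hw']]; auto. lra.
    exists w; split; [lra|auto].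
Qed.

Lemma rolle_u2 (h : nat -> R -> R) lo hi a b c :
  (forall k x, (k < 2)%nat -> is_derive (h k) x (h (S k) x)) ->
  lo < a < hi -> lo < b < hi -> lo < c < hi -> a <> b -> a <> c -> b <> c ->
  h 0%nat a = 0 -> h 0%nat b = 0 -> h 0%nat c = 0 ->
  exists w, lo < w < hi /\ h 2%nat w = 0.
Proof.
  intros Hd Ia Ib Ic N1 N2 N3 Ha Hb Hc.
  assert (K : forall x y z, lo < x -> z < hi -> x < y -> y < z -> h 0%nat x = 0 -> h 0%nat y = 0 -> h 0%nat z = 0 -> exists w, lo < w < hi /\ h 2%nat w = 0).
  { intros x y z ? ? ? ? ? ? ?. destruct (rolle_c2 h x y z) as [w [Hw Hw']]; auto.
    exists w; split; [lra|auto]. }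
  destruct (Rlt_le_dec a b); destruct (Rlt_le_dec b c); destruct (Rlt_le_dec a c);
  first [ apply (K a b c); auto; lra | apply (K a c b); auto; lra
        | apply (K b a c); auto; lra | apply (K b c a); auto; lra
        | apply (K c a b); auto; lra | apply (K c b a); auto; lra ].
Qed.

Lemma rolle_u3 (h : nat -> R -> R) lo hi a b c d :
  (forall k x, (k < 3)%nat -> is_derive (h k) x (h (S k) x)) ->
  lo < a < hi -> lo < b < hi -> lo < c < hi -> lo < d < hi ->
  a <> b -> a <> c -> a <> d -> b <> c -> b <> d -> c <> d ->
  h 0%nat a = 0 -> h 0%nat b = 0 -> h 0%nat c = 0 -> h 0%nat d = 0 ->
  exists w, lo < w < hi /\ h 3%nat w = 0.
Proof.
  intros Hd Ia Ib Ic Id N1 N2 N3 N4 N5 N6 Ha Hb Hc Hdd.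
  assert (K : forall x y z u, lo < x -> u < hi -> x < y -> y < z -> z < u -> h 0%nat x = 0 -> h 0%nat y = 0 -> h 0%nat z = 0 -> h 0%nat u = 0 -> exists w, lo < w < hi /\ h 3%nat w = 0).
  { intros x y z u ? ? ? ? ? ? ? ? ?. destruct (rolle_c3 h x y z u) as [w [Hw Hw']]; auto.
    exists w; split; [lra|auto]. }
  destruct (Rlt_le_dec a b); destruct (Rlt_le_dec b c); destruct (Rlt_le_dec a c);
  destruct (Rlt_le_dec a d); destruct (Rlt_le_dec b d); destruct (Rlt_le_dec c d);
  first [ apply (K a b c d); auto; lra | apply (K a b d c); auto; lra
        | apply (K a c b d); auto; lra | apply (K a c d b); auto; lra
        | apply (K a d b c); auto; lra | apply (K a d c b); auto; lra
        | apply (K b a c d); auto; lra | apply (K b a d c); auto; lra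
        | apply (K b c a d); auto; lra | apply (K b c d a); auto; lra
        | apply (K b d a c); auto; lra | apply (K b d c a); auto; lra
        | apply (K c a b d); auto; lra | apply (K c a d b); auto; lra
        | apply (K c b a d); auto; lra | apply (K c b d a); auto; lra
        | apply (K c d a b); auto; lra | apply (K c d b a); auto; lra
        | apply (K d a b c); auto; lra | apply (K d a c b); auto; lra
        | apply (K d b a c); auto; lra | apply (K d b c a); auto; lra
        | apply (K d c a b); auto; lra | apply (K d c b a); auto; lra ].
Qed.
Open Scope R_scope.

Lemma dplus (f g : R -> R) x df dg : is_derive f x df -> is_derive g x dg ->
  is_derive (fun t => f t + g t) x (df + dg).
Proof. intros. apply (is_derive_plus f g x df dg); auto. Qed.
Lemma dmult (f g : R -> R) x df dg : is_derive f x df -> is_derive g x dg ->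
  is_derive (fun t => f t * g t) x (df * g x + f x * dg).
Proof. intros. apply (is_derive_mult f g x df dg); auto. intros; apply Rmult_comm. Qed.
Lemma dcst (c : R) x : is_derive (fun _ => c) x 0.
Proof. apply (is_derive_const c x). Qed.
Lemma dval (f : R -> R) x l l' : is_derive f x l -> l = l' -> is_derive f x l'.
Proof. intros H ->; exact H. Qed.

Lemma dgk (f : R -> R) k x : smooth f -> is_derive (Derive_n f k) x (Derive_n f (S k) x).
Proof. intros H. apply (Derive_correct (Derive_n f k) x (H k x)). Qed.

Definition F1 (gx gy : R -> R) (k : nat) (s : R) : R :=
  let x0 := gx s in let y0 := gy s in
  let x1 := Derive_n gx 1 s in let y1 := Derive_n gy 1 s in
  let x2 := Derive_n gx 2 s in let y2 := Derive_n gy 2 s in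
  let x3 := Derive_n gx 3 s in let y3 := Derive_n gy 3 s in
  match k with
  | O => x0 * x0 + y0 * y0
  | 1%nat => 2 * (x0 * x1 + y0 * y1)
  | 2%nat => 2 * (x1 * x1 + x0 * x2 + y1 * y1 + y0 * y2)
  | _ => 2 * (3 * (x1 * x2) + x0 * x3 + 3 * (y1 * y2) + y0 * y3)
  end.

Lemma dF1 gx gy k x : smooth gx -> smooth gy -> (k < 3)%nat ->
  is_derive (F1 gx gy k) x (F1 gx gy (S k) x).
Proof.
  intros Sx Sy Hk.
  assert (X0 := dgk gx 0 x Sx). assert (X1 := dgk gx 1 x Sx). assert (X2 := dgk gx 2 x Sx).
  assert (Y0 := dgk gy 0 x Sy). assert (Y1 := dgk gy 1 x Sy). assert (Y2 := dgk gy 2 x Sy).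
  change (is_derive gx x (Derive_n gx 1 x)) in X0. change (is_derive gy x (Derive_n gy 1 x)) in Y0.
  destruct k as [|[|[|k]]]; [| | |lia]; unfold F1.
  - eapply dval. apply dplus; apply dmult; eauto. simpl. ring.
  - eapply dval. apply (is_derive_scal (fun t => _) x 2).
    apply dplus; apply dmult; eauto. simpl. unfold scal; simpl; unfold mult; simpl. ring.
  - eapply dval. apply (is_derive_scal (fun t => _) x 2).
    apply dplus; [apply dplus; [apply dplus|]|]; apply dmult; eauto.
    simpl. unfold scal; simpl; unfold mult; simpl. ring.
Qed.

Lemma exmult (f g : R -> R) x : ex_derive f x -> ex_derive g x -> ex_derive (fun t => f t * g t) x.
Proof. intros [a Ha] [b Hb]. eexists. apply dmult; eauto. Qed.
Lemma explus (f g : R -> R) x : ex_derive f x -> ex_derive g x -> ex_derive (fun t => f t + g t) x.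
Proof. intros [a Ha] [b Hb]. eexists. apply dplus; eauto. Qed.
Lemma excst (c : R) x : ex_derive (fun _ => c) x.
Proof. eexists. apply dcst. Qed.

Lemma exF1 gx gy k x : smooth gx -> smooth gy -> ex_derive (F1 gx gy k) x.
Proof.
  intros Sx Sy. destruct (Compare_dec.lt_dec k 3).
  - eexists. apply dF1; auto.
  - destruct k as [|[|[|k]]]; [lia|lia|lia|]. unfold F1.
    assert (A0 : ex_derive gx x) by apply (Sx 0%nat x).
    assert (B0 : ex_derive gy x) by apply (Sy 0%nat x).
    assert (A1 := Sx 1%nat x). assert (A2 := Sx 2%nat x). assert (A3 := Sx 3%nat x).
    assert (B1 := Sy 1%nat x). assert (B2 := Sy 2%nat x). assert (B3 := Sy 3%nat x).
    apply exmult; [apply excst|].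
    apply explus; [apply explus; [apply explus|]|].
    + apply exmult; [apply excst| apply exmult; assumption].
    + apply exmult; assumption.
    + apply exmult; [apply excst| apply exmult; assumption].
    + apply exmult; assumption.
Qed.

Definition det3 (a1 a2 a3 b1 b2 b3 c1 c2 c3 : R) : R :=
  a1*(b2*c3 - b3*c2) - a2*(b1*c3 - b3*c1) + a3*(b1*c2 - b2*c1).
Definition det4 (a1 a2 a3 a4 b1 b2 b3 b4 c1 c2 c3 c4 d1 d2 d3 d4 : R) : R :=
  - d1 * det3 a2 a3 a4 b2 b3 b4 c2 c3 c4
  + d2 * det3 a1 a3 a4 b1 b3 b4 c1 c3 c4
  - d3 * det3 a1 a2 a4 b1 b2 b4 c1 c2 c4
  + d4 * det3 a1 a2 a3 b1 b2 b3 c1 c2 c3.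
Definition V4 := (R * R * R * R)%type.
Definition det4v (a b c d : V4) : R :=
  match a, b, c, d with
  | (a1, a2, a3, a4), (b1, b2, b3, b4), (c1, c2, c3, c4), (d1, d2, d3, d4) =>
    det4 a1 a2 a3 a4 b1 b2 b3 b4 c1 c2 c3 c4 d1 d2 d3 d4
  end.

Lemma det4v_rep14 a b c : det4v a b c a = 0.
Proof. destruct a as [[[? ?] ?] ?], b as [[[? ?] ?] ?], c as [[[? ?] ?] ?]. unfold det4v, det4, det3. ring. Qed.
Lemma det4v_rep24 a b c : det4v b a c a = 0.
Proof. destruct a as [[[? ?] ?] ?], b as [[[? ?] ?] ?], c as [[[? ?] ?] ?]. unfold det4v, det4, det3. ring. Qed.
Lemma det4v_rep34 a b c : det4v b c a a = 0.
Proof. destruct a as [[[? ?] ?] ?], b as [[[? ?] ?] ?], c as [[[? ?] ?] ?]. unfold det4v, det4, det3. ring. Qed.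
Lemma det4v_sw34 a b c d : det4v a b c d = - det4v a b d c.
Proof. destruct a as [[[? ?] ?] ?], b as [[[? ?] ?] ?], c as [[[? ?] ?] ?], d as [[[? ?] ?] ?]. unfold det4v, det4, det3. ring. Qed.
Lemma det4v_sw24 a b c d : det4v a b c d = - det4v a d c b.
Proof. destruct a as [[[? ?] ?] ?], b as [[[? ?] ?] ?], c as [[[? ?] ?] ?], d as [[[? ?] ?] ?]. unfold det4v, det4, det3. ring. Qed.

Definition Fc (gx gy : R -> R) (k : nat) (s : R) : V4 :=
  (F1 gx gy k s, Derive_n gx k s, Derive_n gy k s, match k with O => 1 | _ => 0 end).

Lemma lin4 (f1 f2 f3 f4 : R -> R) d1 d2 d3 d4 m1 m2 m3 m4 x :
  is_derive f1 x d1 -> is_derive f2 x d2 -> is_derive f3 x d3 -> is_derive f4 x d4 ->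
  is_derive (fun s => - f1 s * m1 + f2 s * m2 - f3 s * m3 + f4 s * m4) x
    (- d1 * m1 + d2 * m2 - d3 * m3 + d4 * m4).
Proof.
  intros H1 H2 H3 H4.
  assert (M1 := dmult f1 (fun _ => m1) x d1 0 H1 (dcst m1 x)).
  assert (M2 := dmult f2 (fun _ => m2) x d2 0 H2 (dcst m2 x)).
  assert (M3 := dmult f3 (fun _ => m3) x d3 0 H3 (dcst m3 x)).
  assert (M4 := dmult f4 (fun _ => m4) x d4 0 H4 (dcst m4 x)).
  assert (O1 := is_derive_opp _ x _ M1).
  assert (S1 := dplus _ _ x _ _ O1 M2).
  assert (S2 := is_derive_minus _ _ x _ _ S1 M3).
  assert (S3 := dplus _ _ x _ _ S2 M4).
  eapply dval. eapply is_derive_ext; [|exact S3].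
  intros t; simpl. unfold minus, plus, opp; simpl. ring.
  unfold minus, plus, opp; simpl. ring.
Qed.

Lemma dFc gx gy A B C k x : smooth gx -> smooth gy -> (k < 3)%nat ->
  is_derive (fun s => det4v A B C (Fc gx gy k s)) x (det4v A B C (Fc gx gy (S k) x)).
Proof.
  intros Sx Sy Hk.
  destruct A as [[[a1 a2] a3] a4], B as [[[b1 b2] b3] b4], C as [[[c1 c2] c3] c4].
  unfold det4v, Fc, det4.
  eapply dval.
  apply (lin4 (F1 gx gy k) (Derive_n gx k) (Derive_n gy k) (fun _ => match k with O => 1 | _ => 0 end)).
  - apply dF1; auto.
  - apply dgk; auto.
  - apply dgk; auto.
  - apply dcst.
  - simpl. ring.
Qed.

Lemma chain gx gy lo hi s1 s2 s3 s4 : smooth gx -> smooth gy ->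
  lo < s1 < hi -> lo < s2 < hi -> lo < s3 < hi -> lo < s4 < hi ->
  s1 <> s2 -> s1 <> s3 -> s1 <> s4 -> s2 <> s3 -> s2 <> s4 -> s3 <> s4 ->
  det4v (Fc gx gy 0 s1) (Fc gx gy 0 s2) (Fc gx gy 0 s3) (Fc gx gy 0 s4) = 0 ->
  exists b c d, lo < b < hi /\ lo < c < hi /\ lo < d < hi /\
    det4v (Fc gx gy 0 s1) (Fc gx gy 2 c) (Fc gx gy 3 d) (Fc gx gy 1 b) = 0.
Proof.
  intros Sx Sy I1 I2 I3 I4 N1 N2 N3 N4 N5 N6 H0.
  destruct (rolle_u3 (fun k s => det4v (Fc gx gy 0 s1) (Fc gx gy 0 s2) (Fc gx gy 0 s3) (Fc gx gy k s))
     lo hi s1 s2 s3 s4) as [d [Id Hd]]; auto.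
  { intros k x Hk. apply dFc; auto. }
  { apply det4v_rep14. } { apply det4v_rep24. } { apply det4v_rep34. }
  destruct (rolle_u2 (fun k s => det4v (Fc gx gy 0 s1) (Fc gx gy 0 s2) (Fc gx gy 3 d) (Fc gx gy k s))
     lo hi s1 s2 s3) as [c [Ic Hc]]; auto.
  { intros k x Hk. apply dFc; auto; lia. }
  { apply det4v_rep14. } { apply det4v_rep24. }
  { cbv beta. rewrite det4v_sw34. cbv beta in Hd. rewrite Hd. ring. }
  destruct (rolle_u1 (fun k s => det4v (Fc gx gy 0 s1) (Fc gx gy 2 c) (Fc gx gy 3 d) (Fc gx gy k s))
     lo hi s1 s2) as [b [Ib Hb]]; auto.
  { intros k x Hk. apply dFc; auto; lia. }
  { apply det4v_rep14. }
  { cbv beta. rewrite det4v_sw24. cbv beta in Hc. rewrite Hc. ring. }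
  exists b, c, d. auto.
Qed.

Definition Lp (q : R * R) : V4 := (fst q * fst q + snd q * snd q, fst q, snd q, 1).

Lemma conc_pts (z w : R * R) r th :
  det4v (Lp z) (Lp w) (Lp (trap_z' r th z w)) (Lp (trap_w' r th z w)) = 0.
Proof.
  destruct z as [zx zy], w as [wx wy].
  assert (H := sin2_cos2 th). unfold Rsqr in H.
  unfold trap_z', trap_w', rot_cw, trap_center, Lp, det4v, det4, det3; simpl.
  nsatz.
Qed.

Lemma rot_fix a b C S : C*C + S*S = 1 -> C < 1 -> a*C + b*S = a -> -a*S + b*C = b -> a = 0 /\ b = 0.
Proof.
  intros H1 H2 E1 E2.
  assert (P : 0 < (C-1)*(C-1) + S*S) by nra.
  assert (Ea : a * ((C-1)*(C-1) + S*S) = 0).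
  { replace (a * ((C-1)*(C-1) + S*S)) with ((C-1)*(a*C + b*S - a) - S*(-a*S + b*C - b)) by ring.
    rewrite E1, E2. ring. }
  assert (Eb : b * ((C-1)*(C-1) + S*S) = 0).
  { replace (b * ((C-1)*(C-1) + S*S)) with (S*(a*C + b*S - a) + (C-1)*(-a*S + b*C - b)) by ring.
    rewrite E1, E2. ring. }
  split; [apply Rmult_integral in Ea | apply Rmult_integral in Eb]; lra.
Qed.

Lemma rot_norm a b C S : C*C + S*S = 1 ->
  (a*C + b*S)*(a*C + b*S) + (-a*S + b*C)*(-a*S + b*C) = a*a + b*b.
Proof. intros H. nsatz. Qed.

Lemma pair_neq (x1 y1 x2 y2 : R) : (x1 <> x2 \/ y1 <> y2) -> (x1, y1) <> (x2, y2).
Proof. intros [H|H] E; inversion E; auto. Qed.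

Lemma trap_distinct (z w : R * R) r th : z <> w -> 0 < r < 1/2 -> 0 < th < PI ->
  let z' := trap_z' r th z w in let w' := trap_w' r th z w in
  z <> z' /\ z <> w' /\ w <> z' /\ w <> w' /\ z' <> w'.
Proof.
  intros Hzw Hr Hth z' w'.
  destruct z as [zx zy], w as [wx wy].
  assert (Hd : 0 < (wx-zx)*(wx-zx) + (wy-zy)*(wy-zy)).
  { destruct (Req_dec zx wx) as [E1|E1]; destruct (Req_dec zy wy) as [E2|E2].
    - subst. exfalso; apply Hzw; reflexivity.
    - assert (wy - zy <> 0) by lra. assert (0 < (wy-zy)*(wy-zy)) by nra. nra.
    - assert (wx - zx <> 0) by lra. assert (0 < (wx-zx)*(wx-zx)) by nra. nra.
    - assert (wx - zx <> 0) by lra. assert (0 < (wx-zx)*(wx-zx)) by nra. nra. }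
  assert (HCS := sin2_cos2 th). unfold Rsqr in HCS.
  assert (HS : 0 < sin th) by (apply sin_gt_0; lra).
  assert (HC : cos th < 1) by nra.
  set (C := cos th) in *. set (S := sin th) in *.
  assert (H1 : C*C + S*S = 1) by lra.
  subst z' w'. unfold trap_z', trap_w', rot_cw, trap_center; simpl. fold C S.
  set (cx := (1 - r) * zx + r * wx). set (cy := (1 - r) * zy + r * wy).
  assert (Ez1 : zx - cx = - r * (wx - zx)) by (unfold cx; ring).
  assert (Ez2 : zy - cy = - r * (wy - zy)) by (unfold cy; ring).
  assert (Ew1 : wx - cx = (1 - r) * (wx - zx)) by (unfold cx; ring).
  assert (Ew2 : wy - cy = (1 - r) * (wy - zy)) by (unfold cy; ring).
  assert (Nz := rot_norm (zx - cx) (zy - cy) C S H1).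
  assert (Nw := rot_norm (wx - cx) (wy - cy) C S H1).
  assert (Dz : (zx-cx)*(zx-cx) + (zy-cy)*(zy-cy) = r*r*((wx-zx)*(wx-zx) + (wy-zy)*(wy-zy))).
  { rewrite Ez1, Ez2. ring. }
  assert (Dw : (wx-cx)*(wx-cx) + (wy-cy)*(wy-cy) = (1-r)*(1-r)*((wx-zx)*(wx-zx) + (wy-zy)*(wy-zy))).
  { rewrite Ew1, Ew2. ring. }
  assert (Rne : r*r*((wx-zx)*(wx-zx) + (wy-zy)*(wy-zy)) <> (1-r)*(1-r)*((wx-zx)*(wx-zx) + (wy-zy)*(wy-zy))).
  { intros E. assert ((1 - 2*r) * ((wx-zx)*(wx-zx) + (wy-zy)*(wy-zy)) = 0) by lra.
    apply Rmult_integral in H. lra. }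
  split; [|split; [|split; [|split]]]; intros E; injection E; clear E; intros E2 E1.
  -
    assert (A1 : (zx - cx)*C + (zy - cy)*S = zx - cx) by lra.
    assert (A2 : -(zx - cx)*S + (zy - cy)*C = zy - cy) by lra.
    destruct (rot_fix _ _ C S H1 HC A1 A2) as [B1 B2].
    apply Hzw. rewrite Ez1 in B1. rewrite Ez2 in B2.
    assert (wx - zx = 0) by (apply Rmult_integral in B1; destruct B1; lra).
    assert (wy - zy = 0) by (apply Rmult_integral in B2; destruct B2; lra).
    f_equal; lra.
  -
    apply Rne. rewrite <- Dz, <- Dw, <- Nw.
    replace (zx - cx) with ((wx - cx) * C + (wy - cy) * S) by lra.
    replace (zy - cy) with (- (wx - cx) * S + (wy - cy) * C) by lra. reflexivity.
  -
    apply Rne. rewrite <- Dz, <- Dw, <- Nz.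
    replace (wx - cx) with ((zx - cx) * C + (zy - cy) * S) by lra.
    replace (wy - cy) with (- (zx - cx) * S + (zy - cy) * C) by lra. reflexivity.
  -
    assert (A1 : (wx - cx)*C + (wy - cy)*S = wx - cx) by lra.
    assert (A2 : -(wx - cx)*S + (wy - cy)*C = wy - cy) by lra.
    destruct (rot_fix _ _ C S H1 HC A1 A2) as [B1 B2].
    apply Hzw. rewrite Ew1 in B1. rewrite Ew2 in B2.
    assert (wx - zx = 0) by (apply Rmult_integral in B1; destruct B1; lra).
    assert (wy - zy = 0) by (apply Rmult_integral in B2; destruct B2; lra).
    f_equal; lra.
  -
    apply Rne. rewrite <- Dz, <- Dw, <- Nz, <- Nw.
    replace ((zx - cx) * C + (zy - cy) * S) with ((wx - cx) * C + (wy - cy) * S) by lra.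
    replace (- (zx - cx) * S + (zy - cy) * C) with (- (wx - cx) * S + (wy - cy) * C) by lra.
    reflexivity.
Qed.

Lemma cont_of_smooth f x : smooth f -> continuity_pt f x.
Proof. intros H. apply continuity_pt_filterlim. exact (ex_derive_continuous (K:=R_AbsRing) f x (H 0%nat x)). Qed.

Lemma per_nat (gx gy : R -> R) L : (forall t, gx (t + L) = gx t /\ gy (t + L) = gy t) ->
  forall n t, gx (t + INR n * L) = gx t /\ gy (t + INR n * L) = gy t.
Proof.
  intros HP n. induction n as [|n IH]; intros t.
  - simpl. rewrite Rmult_0_l, Rplus_0_r. auto.
  - rewrite S_INR. replace (t + (INR n + 1) * L) with ((t + INR n * L) + L) by ring.
    destruct (HP (t + INR n * L)) as [A B]. destruct (IH t) as [C D].
    rewrite A, B, C, D. auto.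
Qed.

Lemma per_Z (gx gy : R -> R) L : (forall t, gx (t + L) = gx t /\ gy (t + L) = gy t) ->
  forall z t, gx (t + IZR z * L) = gx t /\ gy (t + IZR z * L) = gy t.
Proof.
  intros HP z t.
  destruct (Z_le_gt_dec 0 z) as [Hz|Hz].
  - rewrite <- (Z2Nat.id z Hz). rewrite <- INR_IZR_INZ. apply per_nat; auto.
  - assert (Hz' : (0 <= - z)%Z) by lia.
    assert (E : IZR z = - INR (Z.to_nat (- z))).
    { rewrite INR_IZR_INZ, Z2Nat.id by exact Hz'. rewrite opp_IZR. ring. }
    rewrite E.
    destruct (per_nat gx gy L HP (Z.to_nat (- z)) (t + - INR (Z.to_nat (- z)) * L)) as [A B].
    replace (t + - INR (Z.to_nat (- z)) * L + INR (Z.to_nat (- z)) * L) with t in A, B by ring.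
    auto.
Qed.

Lemma reduce (gx gy : R -> R) L a t : 0 < L -> (forall t, gx (t + L) = gx t /\ gy (t + L) = gy t) ->
  exists t', a <= t' < a + L /\ gx t' = gx t /\ gy t' = gy t.
Proof.
  intros HL HP.
  destruct (archimed ((t - a) / L)) as [A1 A2].
  set (k := up ((t - a) / L)) in *.
  exists (t + IZR (1 - k)%Z * L).
  rewrite minus_IZR.
  assert (E : (t - a) = ((t - a) / L) * L) by (field; lra).
  split; [split|].
  - assert (IZR k - 1 <= (t - a) / L) by lra.
    assert ((IZR k - 1) * L <= (t - a) / L * L) by (apply Rmult_le_compat_r; lra).
    nra.
  - assert ((t - a) / L * L < IZR k * L) by (apply Rmult_lt_compat_r; lra).
    nra.
  - rewrite <- minus_IZR. apply per_Z; auto.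
Qed.

Definition psi (gx gy : R -> R) (t0 u : R) : R :=
  (gx u - gx t0) * (gx u - gx t0) + (gy u - gy t0) * (gy u - gy t0).

Lemma param_close (gx gy : R -> R) L t0 eps : smooth_jordan_curve gx gy L -> 0 <= t0 < L ->
  0 < eps < L ->
  exists eta, 0 < eta /\ forall s, psi gx gy t0 s < eta ->
    exists s', Rabs (s' - t0) < eps /\ gx s' = gx s /\ gy s' = gy s.
Proof.
  intros [HL [Sx [Sy [HP [Hreg Hinj]]]]] Ht0 He.
  assert (Cpsi : forall c, continuity_pt (psi gx gy t0) c).
  { intros c. unfold psi.
    assert (Cx := cont_of_smooth gx c Sx). assert (Cy := cont_of_smooth gy c Sy).
    apply continuity_pt_plus; apply continuity_pt_mult;
    apply continuity_pt_minus; auto; apply continuity_pt_const; intros ? ?; reflexivity. }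
  destruct (continuity_ab_min (psi gx gy t0) (t0 + eps/2) (t0 + L - eps/2)) as [m [Hm Im]].
  { lra. } { intros; apply Cpsi. }
  assert (Hpos : 0 < psi gx gy t0 m).
  { assert (Hne : ~ (gx m = gx t0 /\ gy m = gy t0)).
    { intros [E1 E2].
      destruct (Rlt_le_dec m L).
      - assert (m = t0) by (apply Hinj; lra). lra.
      - destruct (HP (m - L)) as [A B]. replace (m - L + L) with m in A, B by ring.
        assert (m - L = t0) by (apply Hinj; try lra; congruence). lra. }
    unfold psi.
    destruct (Req_dec (gx m) (gx t0)).
    - assert (gy m <> gy t0) by tauto.
      assert (gy m - gy t0 <> 0) by lra.
      assert (0 < (gy m - gy t0) * (gy m - gy t0)) by (apply (Rsqr_pos_lt (gy m - gy t0)); auto).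
      assert (0 <= (gx m - gx t0) * (gx m - gx t0)) by apply (Rle_0_sqr (gx m - gx t0)). lra.
    - assert (gx m - gx t0 <> 0) by lra.
      assert (0 < (gx m - gx t0) * (gx m - gx t0)) by (apply (Rsqr_pos_lt (gx m - gx t0)); auto).
      assert (0 <= (gy m - gy t0) * (gy m - gy t0)) by apply (Rle_0_sqr (gy m - gy t0)). lra. }
  exists (psi gx gy t0 m). split; [exact Hpos|].
  intros s Hs.
  destruct (reduce gx gy L (t0 - eps/2) s HL HP) as [s' [Is [E1 E2]]].
  exists s'. split; [|auto].
  destruct (Rlt_le_dec s' (t0 + eps/2)).
  - apply Rabs_def1; lra.
  - exfalso.
    assert (psi gx gy t0 m <= psi gx gy t0 s') by (apply Hm; lra).
    unfold psi in *. rewrite E1, E2 in H. lra.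
Qed.

Lemma close_seq (u : nat -> R * R) p eta : pt_lim u p -> 0 < eta ->
  eventually (fun n => (fst (u n) - fst p) * (fst (u n) - fst p) + (snd (u n) - snd p) * (snd (u n) - snd p) < eta).
Proof.
  intros [H1 H2] He.
  apply is_lim_seq_spec in H1. apply is_lim_seq_spec in H2.
  assert (Hd : 0 < Rmin 1 (eta / 2)) by (apply Rmin_pos; lra).
  specialize (H1 (mkposreal _ Hd)). specialize (H2 (mkposreal _ Hd)).
  generalize (filter_and _ _ H1 H2). apply filter_imp. simpl.
  intros n [A B].
  assert (M1 := Rmin_l 1 (eta/2)). assert (M2 := Rmin_r 1 (eta/2)).
  set (x := fst (u n) - fst p) in *. set (y := snd (u n) - snd p) in *.
  set (m := Rmin 1 (eta / 2)) in *.
  assert (x * x < m * m).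
  { replace (x*x) with (Rabs x * Rabs x)
      by (rewrite <- Rabs_mult; apply Rabs_pos_eq; nra).
    apply Rmult_le_0_lt_compat; try apply Rabs_pos; auto. }
  assert (y * y < m * m).
  { replace (y*y) with (Rabs y * Rabs y)
      by (rewrite <- Rabs_mult; apply Rabs_pos_eq; nra).
    apply Rmult_le_0_lt_compat; try apply Rabs_pos; auto. }
  assert (m * m <= m) by nra. lra.
Qed.

Lemma Fc0_Lp gx gy s (q : R * R) : gx s = fst q -> gy s = snd q -> Fc gx gy 0 s = Lp q.
Proof. intros E1 E2. unfold Fc, F1, Lp. simpl. rewrite E1, E2. reflexivity. Qed.

Lemma near_zero gx gy L r th zs ws p t0 eps :
  smooth_jordan_curve gx gy L -> 0 < r < 1 / 2 -> (forall n, 0 < th n < PI) ->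
  (forall n, zs n <> ws n) ->
  (forall n, inscribed gx gy (trapezoid r (th n) (zs n) (ws n))) ->
  0 <= t0 < L -> gx t0 = fst p -> gy t0 = snd p ->
  pt_lim zs p -> pt_lim ws p ->
  pt_lim (fun n => trap_z' r (th n) (zs n) (ws n)) p ->
  pt_lim (fun n => trap_w' r (th n) (zs n) (ws n)) p ->
  0 < eps < L ->
  exists v : R * R * R * R, let '(a, b, c, d) := v in
    Rabs (a - t0) < eps /\ Rabs (b - t0) < eps /\ Rabs (c - t0) < eps /\ Rabs (d - t0) < eps /\
    det4v (Fc gx gy 0 a) (Fc gx gy 2 c) (Fc gx gy 3 d) (Fc gx gy 1 b) = 0.
Proof.
  intros J Hr Hth Hzw Hins Ht0 Ep1 Ep2 Lz Lw Lz' Lw' He.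
  destruct (param_close gx gy L t0 eps J Ht0 He) as [eta [Heta Hcl]].
  assert (Ev := filter_and _ _ (filter_and _ _ (close_seq _ _ _ Lz Heta) (close_seq _ _ _ Lw Heta))
                          (filter_and _ _ (close_seq _ _ _ Lz' Heta) (close_seq _ _ _ Lw' Heta))).
  destruct Ev as [N HN]. specialize (HN N (le_n N)). simpl in HN.
  destruct HN as [[Dz Dw] [Dz' Dw']].
  set (z := zs N) in *. set (w := ws N) in *.
  set (z' := trap_z' r (th N) z w) in *. set (w' := trap_w' r (th N) z w) in *.
  assert (Hget : forall q, trapezoid r (th N) z w q ->
     (fst q - fst p) * (fst q - fst p) + (snd q - snd p) * (snd q - snd p) < eta ->
     exists s, Rabs (s - t0) < eps /\ gx s = fst q /\ gy s = snd q).
  { intros q Tq Dq. destruct (Hins N q Tq) as [s0 [E1 E2]].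
    destruct (Hcl s0) as [s [Hs [F1' F2']]].
    { unfold psi. rewrite E1, E2, Ep1, Ep2. exact Dq. }
    exists s. split; [auto|]. split; congruence. }
  destruct (Hget z) as [s1 [I1 [A1 B1]]]; [left; reflexivity| exact Dz|].
  destruct (Hget w) as [s2 [I2 [A2 B2]]]; [right; left; reflexivity| exact Dw|].
  destruct (Hget z') as [s3 [I3 [A3 B3]]]; [right; right; left; reflexivity| exact Dz'|].
  destruct (Hget w') as [s4 [I4 [A4 B4]]]; [right; right; right; reflexivity| exact Dw'|].
  destruct (trap_distinct z w r (th N) (Hzw N) Hr (Hth N)) as [N1 [N2 [N3 [N4 N5]]]].
  fold z' w' in N1, N2, N3, N4, N5.
  assert (Hneq : forall si sj (qi qj : R * R), gx si = fst qi -> gy si = snd qi ->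
             gx sj = fst qj -> gy sj = snd qj -> qi <> qj -> si <> sj).
  { intros si sj qi qj E1 E2 E3 E4 Hq Hs. subst sj. apply Hq.
    destruct qi, qj; simpl in *; f_equal; congruence. }
  destruct (chain gx gy (t0 - eps) (t0 + eps) s1 s2 s3 s4) as [b [c [d [Ib [Ic [Id HW]]]]]];
    try (destruct J as [? [? [? ?]]]; assumption);
    try (apply Rabs_def2 in I1; lra); try (apply Rabs_def2 in I2; lra);
    try (apply Rabs_def2 in I3; lra); try (apply Rabs_def2 in I4; lra).
  - eapply Hneq; eauto.
  - eapply Hneq; eauto.
  - eapply Hneq; eauto.
  - eapply Hneq; eauto.
  - eapply Hneq; eauto.
  - eapply Hneq; eauto.
  - rewrite (Fc0_Lp gx gy s1 z), (Fc0_Lp gx gy s2 w), (Fc0_Lp gx gy s3 z'), (Fc0_Lp gx gy s4 w'); auto.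
    apply conc_pts.
  - exists (s1, b, c, d). repeat split; auto; apply Rabs_def1; lra.
Qed.

Lemma inv_lim : is_lim_seq (fun n => / (INR n + 1)) 0.
Proof.
  replace (Finite 0) with (Rbar_inv p_infty) by reflexivity.
  apply is_lim_seq_inv; [|discriminate].
  eapply is_lim_seq_plus; [apply is_lim_seq_INR | apply is_lim_seq_const | reflexivity].
Qed.

Lemma squeeze_lim (u : nat -> R) t0 : (forall m, Rabs (u m - t0) < / (INR m + 1)) -> is_lim_seq u t0.
Proof.
  intros H.
  apply (is_lim_seq_le_le (fun m => t0 - / (INR m + 1)) u (fun m => t0 + / (INR m + 1))).
  - intros m. specialize (H m). apply Rabs_def2 in H. lra.
  - replace (Finite t0) with (Finite (t0 - 0)) by (f_equal; ring).
    apply is_lim_seq_minus'; [apply is_lim_seq_const | apply inv_lim].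
  - replace (Finite t0) with (Finite (t0 + 0)) by (f_equal; ring).
    apply is_lim_seq_plus'; [apply is_lim_seq_const | apply inv_lim].
Qed.

Lemma lim_opp (u : nat -> R) (l : R) : is_lim_seq u l -> is_lim_seq (fun n => - u n) (- l).
Proof.
  intros H. replace (Finite (- l)) with (Rbar_opp l) by reflexivity.
  apply (proj1 (is_lim_seq_opp u l)). exact H.
Qed.

Lemma det4_lim (a1 a2 a3 a4 b1 b2 b3 b4 c1 c2 c3 c4 d1 d2 d3 d4 : nat -> R)
  (A1 A2 A3 A4 B1 B2 B3 B4 C1 C2 C3 C4 D1 D2 D3 D4 : R) :
  is_lim_seq a1 A1 -> is_lim_seq a2 A2 -> is_lim_seq a3 A3 -> is_lim_seq a4 A4 ->
  is_lim_seq b1 B1 -> is_lim_seq b2 B2 -> is_lim_seq b3 B3 -> is_lim_seq b4 B4 ->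
  is_lim_seq c1 C1 -> is_lim_seq c2 C2 -> is_lim_seq c3 C3 -> is_lim_seq c4 C4 ->
  is_lim_seq d1 D1 -> is_lim_seq d2 D2 -> is_lim_seq d3 D3 -> is_lim_seq d4 D4 ->
  is_lim_seq (fun n => det4 (a1 n) (a2 n) (a3 n) (a4 n) (b1 n) (b2 n) (b3 n) (b4 n)
                            (c1 n) (c2 n) (c3 n) (c4 n) (d1 n) (d2 n) (d3 n) (d4 n))
    (det4 A1 A2 A3 A4 B1 B2 B3 B4 C1 C2 C3 C4 D1 D2 D3 D4).
Proof.
  intros. unfold det4, det3.
  repeat match goal with
  | |- is_lim_seq (fun n => _ + _) _ => apply is_lim_seq_plus'
  | |- is_lim_seq (fun n => _ - _) _ => apply is_lim_seq_minus'
  | |- is_lim_seq (fun n => _ * _) _ => apply is_lim_seq_mult'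
  | |- is_lim_seq (fun n => - _) _ => apply lim_opp
  end; assumption.
Qed.

Lemma cont_F1 gx gy k x : smooth gx -> smooth gy -> continuity_pt (F1 gx gy k) x.
Proof.
  intros Sx Sy. apply continuity_pt_filterlim.
  exact (ex_derive_continuous (K:=R_AbsRing) _ x (exF1 gx gy k x Sx Sy)).
Qed.
Lemma cont_Dn f k x : smooth f -> continuity_pt (Derive_n f k) x.
Proof.
  intros Sx. apply continuity_pt_filterlim.
  exact (ex_derive_continuous (K:=R_AbsRing) _ x (Sx k x)).
Qed.

Lemma W_lim (gx gy : R -> R) (a b c d : nat -> R) (t0 : R) : smooth gx -> smooth gy ->
  is_lim_seq a t0 -> is_lim_seq b t0 -> is_lim_seq c t0 -> is_lim_seq d t0 ->
  is_lim_seq (fun m => det4v (Fc gx gy 0 (a m)) (Fc gx gy 2 (c m)) (Fc gx gy 3 (d m)) (Fc gx gy 1 (b m)))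
    (det4v (Fc gx gy 0 t0) (Fc gx gy 2 t0) (Fc gx gy 3 t0) (Fc gx gy 1 t0)).
Proof.
  intros Sx Sy La Lb Lc Ld.
  cbv beta iota delta [det4v Fc].
  apply det4_lim; try apply is_lim_seq_const;
  match goal with
  | |- is_lim_seq (fun n => ?f (?u n)) _ =>
      apply (is_lim_seq_continuous f u);
      [ first [apply cont_F1; auto | apply cont_Dn; auto] | assumption ]
  end.
Qed.

Definition Dv (gx gy : R -> R) (t : R) : R :=
  let X1 := Derive_n gx 1 t in let X2 := Derive_n gy 1 t in
  let Y1 := Derive_n gx 2 t in let Y2 := Derive_n gy 2 t in
  let Z1 := Derive_n gx 3 t in let Z2 := Derive_n gy 3 t in
  (X1*X1 + X2*X2) * (X1*Z2 - X2*Z1) - 3 * (X1*Y2 - X2*Y1) * (X1*Y1 + X2*Y2).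

Lemma W_Dv (gx gy : R -> R) (t : R) :
  det4v (Fc gx gy 0 t) (Fc gx gy 2 t) (Fc gx gy 3 t) (Fc gx gy 1 t) = 2 * Dv gx gy t.
Proof.
  cbv beta iota zeta delta [det4v Fc F1 Dv det4 det3].
  change (Derive_n gx 0 t) with (gx t). change (Derive_n gy 0 t) with (gy t).
  generalize (gx t) (gy t) (Derive_n gx 1 t) (Derive_n gy 1 t) (Derive_n gx 2 t) (Derive_n gy 2 t) (Derive_n gx 3 t) (Derive_n gy 3 t).
  intros. ring.
Qed.

Lemma curv_zero (gx gy : R -> R) (t : R) : smooth gx -> smooth gy ->
  0 < (Derive gx t) ^ 2 + (Derive gy t) ^ 2 -> Dv gx gy t = 0 ->
  Derive (curvature gx gy) t = 0.
Proof.
  intros Sx Sy Hreg HD.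
  assert (HX1 : is_derive (fun u => Derive gx u) t (Derive_n gx 2 t)) by exact (dgk gx 1 t Sx).
  assert (HY1 : is_derive (fun u => Derive gy u) t (Derive_n gy 2 t)) by exact (dgk gy 1 t Sy).
  assert (HX2 := dgk gx 2 t Sx). assert (HY2 := dgk gy 2 t Sy).
  assert (HN := is_derive_minus _ _ t _ _ (dmult _ _ t _ _ HX1 HY2) (dmult _ _ t _ _ HY1 HX2)).
  assert (HS := dplus _ _ t _ _ (is_derive_pow _ 2 t _ HX1) (is_derive_pow _ 2 t _ HY1)).
  assert (Hq := is_derive_sqrt _ t _ HS Hreg).
  assert (HQ := is_derive_pow _ 3 t _ Hq).
  set (S := Derive gx t ^ 2 + Derive gy t ^ 2) in *.
  assert (Hqpos : 0 < sqrt S) by (apply sqrt_lt_R0; exact Hreg).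
  assert (HQne : sqrt S ^ 3 <> 0) by (apply pow_nonzero; lra).
  assert (HK := is_derive_div _ _ t _ _ HN HQ HQne).
  assert (HK' : is_derive (curvature gx gy) t
      ((minus (Derive_n gx 2 t * Derive_n gy 2 t + Derive gx t * Derive_n gy 3 t)
              (Derive_n gy 2 t * Derive_n gx 2 t + Derive gy t * Derive_n gx 3 t) * sqrt S ^ 3 -
        minus (Derive gx t * Derive_n gy 2 t) (Derive gy t * Derive_n gx 2 t) *
        (INR 3 * ((INR 2 * Derive_n gx 2 t * Derive gx t ^ Init.Nat.pred 2 +
                   INR 2 * Derive_n gy 2 t * Derive gy t ^ Init.Nat.pred 2) / (2 * sqrt S)) *
         sqrt S ^ Init.Nat.pred 3)) / (sqrt S ^ 3) ^ 2)).
  { eapply is_derive_ext; [|exact HK]. intros u. unfold curvature, minus, plus, opp. simpl. reflexivity. }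
  rewrite (is_derive_unique _ _ _ HK').
  unfold Dv in HD; cbv zeta in HD. change (Derive_n gx 1 t) with (Derive gx t) in HD.
  change (Derive_n gy 1 t) with (Derive gy t) in HD.
  assert (HSS : sqrt S * sqrt S = S) by (apply sqrt_sqrt; lra).
  set (q := sqrt S) in *.
  clear HK HK' HQ Hq HS HN HX1 HY1 HX2 HY2.
  set (X1 := Derive gx t) in *. set (X2 := Derive gy t) in *.
  set (Y1 := Derive_n gx 2 t) in *. set (Y2 := Derive_n gy 2 t) in *.
  set (Z1 := Derive_n gx 3 t) in *. set (Z2 := Derive_n gy 3 t) in *.
  clearbody q X1 X2 Y1 Y2 Z1 Z2.
  unfold minus, plus, opp. simpl.
  unfold Rdiv. apply Rmult_eq_0_compat_r.
  match goal with |- ?n = 0 => transitivity (q * (q*q*(X1*Z2 - X2*Z1) - 3*(X1*Y2 - X2*Y1)*(X1*Y1+X2*Y2))) end.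
  - field. lra.
  - rewrite HSS. unfold S. replace (X1 ^ 2 + X2 ^ 2) with (X1*X1 + X2*X2) by ring. rewrite HD. ring.
Qed.

Lemma W_zero gx gy L r th zs ws p t0 :
  smooth_jordan_curve gx gy L -> 0 < r < 1 / 2 -> (forall n, 0 < th n < PI) ->
  (forall n, zs n <> ws n) ->
  (forall n, inscribed gx gy (trapezoid r (th n) (zs n) (ws n))) ->
  0 <= t0 < L -> gx t0 = fst p -> gy t0 = snd p ->
  pt_lim zs p -> pt_lim ws p ->
  pt_lim (fun n => trap_z' r (th n) (zs n) (ws n)) p ->
  pt_lim (fun n => trap_w' r (th n) (zs n) (ws n)) p ->
  det4v (Fc gx gy 0 t0) (Fc gx gy 2 t0) (Fc gx gy 3 t0) (Fc gx gy 1 t0) = 0.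
Proof.
  intros J Hr Hth Hzw Hins Ht0 Ep1 Ep2 Lz Lw Lz' Lw'.
  assert (HL : 0 < L) by (destruct J; assumption).
  assert (Sx : smooth gx) by (destruct J as [? [? ?]]; assumption).
  assert (Sy : smooth gy) by (destruct J as [? [? [? ?]]]; assumption).
  set (e := fun m : nat => Rmin (L / 2) (/ (INR m + 1))).
  assert (He : forall m, 0 < e m < L).
  { intros m. unfold e. split.
    - apply Rmin_pos; [lra|]. apply Rinv_0_lt_compat. assert (0 <= INR m) by apply pos_INR. lra.
    - assert (Rmin (L / 2) (/ (INR m + 1)) <= L / 2) by apply Rmin_l. lra. }
  assert (Hex : forall m, exists v : R * R * R * R, let '(a, b, c, d) := v in
    Rabs (a - t0) < e m /\ Rabs (b - t0) < e m /\ Rabs (c - t0) < e m /\ Rabs (d - t0) < e m /\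
    det4v (Fc gx gy 0 a) (Fc gx gy 2 c) (Fc gx gy 3 d) (Fc gx gy 1 b) = 0).
  { intros m. apply (near_zero gx gy L r th zs ws p t0 (e m)); auto. }
  set (V := fun m => proj1_sig (constructive_indefinite_description _ (Hex m))).
  assert (HV : forall m, let '(a, b, c, d) := V m in
    Rabs (a - t0) < e m /\ Rabs (b - t0) < e m /\ Rabs (c - t0) < e m /\ Rabs (d - t0) < e m /\
    det4v (Fc gx gy 0 a) (Fc gx gy 2 c) (Fc gx gy 3 d) (Fc gx gy 1 b) = 0).
  { intros m. unfold V. exact (proj2_sig (constructive_indefinite_description _ (Hex m))). }
  set (a := fun m => fst (fst (fst (V m)))).
  set (b := fun m => snd (fst (fst (V m)))).
  set (c := fun m => snd (fst (V m))).
  set (d := fun m => snd (V m)).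
  assert (HV' : forall m,
    Rabs (a m - t0) < e m /\ Rabs (b m - t0) < e m /\ Rabs (c m - t0) < e m /\ Rabs (d m - t0) < e m /\
    det4v (Fc gx gy 0 (a m)) (Fc gx gy 2 (c m)) (Fc gx gy 3 (d m)) (Fc gx gy 1 (b m)) = 0).
  { intros m. generalize (HV m). unfold a, b, c, d. destruct (V m) as [[[a0 b0] c0] d0]. simpl. auto. }
  assert (Hle : forall m, e m <= / (INR m + 1)) by (intros; apply Rmin_r).
  assert (La : is_lim_seq a t0).
  { apply squeeze_lim. intros m. destruct (HV' m) as [H _]. specialize (Hle m). lra. }
  assert (Lb : is_lim_seq b t0).
  { apply squeeze_lim. intros m. destruct (HV' m) as [_ [H _]]. specialize (Hle m). lra. }
  assert (Lc : is_lim_seq c t0).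
  { apply squeeze_lim. intros m. destruct (HV' m) as [_ [_ [H _]]]. specialize (Hle m). lra. }
  assert (Ld : is_lim_seq d t0).
  { apply squeeze_lim. intros m. destruct (HV' m) as [_ [_ [_ [H _]]]]. specialize (Hle m). lra. }
  assert (HW := W_lim gx gy a b c d t0 Sx Sy La Lb Lc Ld).
  assert (H0 : is_lim_seq (fun m => det4v (Fc gx gy 0 (a m)) (Fc gx gy 2 (c m)) (Fc gx gy 3 (d m)) (Fc gx gy 1 (b m))) 0).
  { apply (is_lim_seq_ext (fun _ => 0)); [|apply is_lim_seq_const].
    intros m. destruct (HV' m) as [_ [_ [_ [_ H]]]]. auto. }
  apply is_lim_seq_unique in HW. apply is_lim_seq_unique in H0.
  rewrite HW in H0. injection H0. auto.
Qed.

Theorem corollary3p3 (gx gy : R -> R) (L r : R) (th : nat -> R)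
  (zs ws : nat -> R * R) (p : R * R) :
  smooth_jordan_curve gx gy L ->
  0 < r < 1 / 2 ->
  (forall n, 0 < th n < PI) ->
  (forall n, zs n <> ws n) ->
  (forall n, inscribed gx gy (trapezoid r (th n) (zs n) (ws n))) ->
  on_curve gx gy p ->
  pt_lim zs p ->
  pt_lim ws p ->
  pt_lim (fun n => trap_z' r (th n) (zs n) (ws n)) p ->
  pt_lim (fun n => trap_w' r (th n) (zs n) (ws n)) p ->
  is_vertex gx gy p.
Proof.
  intros J Hr Hth Hzw Hins [t1 [E1 E2]] Lz Lw Lz' Lw'.
  assert (J' := J).
  destruct J' as [HL [Sx [Sy [HP [Hreg Hinj]]]]].
  destruct (reduce gx gy L 0 t1 HL HP) as [t0 [It0 [F1' F2']]].
  assert (HW := W_zero gx gy L r th zs ws p t0 J Hr Hth Hzw Hins ltac:(lra)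
                 ltac:(congruence) ltac:(congruence) Lz Lw Lz' Lw').
  rewrite W_Dv in HW.
  exists t0. split; [congruence|]. split; [congruence|].
  apply curv_zero; auto. lra.
Qed.
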